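(* Let $W$ be a central type and let $t$ be a closed expression with $\vdash t:W$ in $\mathcal{L}$ (the rule (struct) may be used). For all values $v$ and lists of resources $l,l'$, if $\langle t\mid\star\mid l\rangle^+\rightsquigarrow^*\langle v\mid\star\mid l'\rangle^{\varepsilon}$ for some polarity $\varepsilon$, then there exists a permutation $\sigma$ such that $l'=\sigma(l)$ (i.e. $l'$ is obtained by reordering the elements of $l$).
   Context: Polarities are $\varepsilon\in\{+,-\}$. Types: positive $P,Q ::= R \mid 1 \mid A\otimes B \mid A\oplus B$; negative $N,M ::= A\multimap B \mid A\,\&\,B$; $\varpi(P)=+$, $\varpi(N)=-$ ($R$ is an atomic type of resources). Central types are $W ::= 1\mid W\otimes W'\mid W\oplus W'$. Fix variables and resource constants $r_n$ ($n\in\mathbb N$). Expressions $t,u$ and values $v,w$: $t,u ::= v \mid (\mathrm{let}\ x^+=t\ \mathrm{in}\ u)^+ \mid (\mathrm{let}\ x^-=v\ \mathrm{in}\ u)^+ \mid \delta(v,(x,y).t)^+ \mid \delta(v,().t)^+ \mid \delta(v,x.t,y.u)^+ \mid (v\,w)^+ \mid (\pi_1 v)^+ \mid (\pi_2 v)^+$; $v,w ::= (\mathrm{let}\ x^+=t\ \mathrm{in}\ v)^- \mid (\mathrm{let}\ x^-=v\ \mathrm{in}\ w)^- \mid \delta(v,(x,y).w)^- \mid \delta(v,().w)^- \mid \delta(v,x.w,y.w')^- \mid (v\,w)^- \mid (\pi_1 v)^- \mid (\pi_2 v)^- \mid x \mid \mathrm{new} \mid \mathrm{delete} \mid (v,w)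 \mid () \mid \iota_1 v \mid \iota_2 v \mid \lambda x.t \mid \langle t,u\rangle \mid r_n$. $t[v/x]$ is capture-avoiding substitution. Contexts are finite lists of typed variables. Typing rules of $\mathcal{L}$ ($v,w$ range over values): (var) $x:A\vdash x:A$. (struct) from $\Gamma\vdash t:A$ and a type-preserving bijection $\sigma$ from entries of $\Gamma$ to entries of $\Gamma'$ (permutation plus renaming) derive $\Gamma'\vdash t[\sigma]:A$. $\vdash\mathrm{new}:1\multimap(R\oplus 1)$; $\vdash\mathrm{delete}:R\multimap 1$. (let) from $\Delta\vdash t:A$, $\Gamma,x:A\vdash u:B$ derive $\Gamma,\Delta\vdash(\mathrm{let}\ x^{\varpi(A)}=t\ \mathrm{in}\ u)^{\varpi(B)}:B$. From $\Gamma\vdash v:A$, $\Delta\vdash w:B$ derive $\Gamma,\Delta\vdash(v,w):A\otimes B$; from $\Delta\vdash v:A\otimes B$, $\Gamma,x:A,y:B,\Gamma'\vdash t:C$ derive $\Gamma,\Delta,\Gamma'\vdash\delta(v,(x,y).t)^{\varpi(C)}:C$. $\vdash():1$; from $\Delta\vdash v:1$, $\Gamma,\Gamma'\vdash t:A$ derive $\Gamma,\Delta,\Gamma'\vdash\delta(v,().t)^{\varpi(A)}:A$. From $\Gamma\vdash v:A$ derive $\Gamma\vdash\iota_1v:A\oplus B$; from $\Gamma\vdash v:B$ derive $\Gamma\vdash\iota_2v:A\oplus B$; from $\Delta\vdash v:A\oplus B$, $\Gamma,x:A,\Gamma'\vdash t:C$, $\Gamma,y:B,\Gamma'\vdash u:C$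 derive $\Gamma,\Delta,\Gamma'\vdash\delta(v,x.t,y.u)^{\varpi(C)}:C$. From $x:A,\Gamma\vdash t:B$ derive $\Gamma\vdash\lambda x.t:A\multimap B$; from $\Gamma\vdash w:A$, $\Delta\vdash v:A\multimap B$ derive $\Gamma,\Delta\vdash(v\,w)^{\varpi(B)}:B$. From $\Gamma\vdash t:A$, $\Gamma\vdash u:B$ derive $\Gamma\vdash\langle t,u\rangle:A\&B$; from $\Gamma\vdash v:A_1\&A_2$ derive $\Gamma\vdash(\pi_iv)^{\varpi(A_i)}:A_i$. Machine: stacks $s ::= \star \mid v^\varepsilon\cdot s \mid \pi_i^\varepsilon\cdot s \mid (x^+.u)^\varepsilon\cdot s$; lists of resources $l ::= []\mid r_n::l$ (the freelist); commands $\langle t\mid s\mid l\rangle^\varepsilon$; $\rightsquigarrow^*$ is the reflexive-transitive closure of the one-step reduction $\rightsquigarrow$ given by ($i\in\{1,2\}$): $\langle(\mathrm{let}\ x^-=v\ \mathrm{in}\ t)^\varepsilon\mid s\mid l\rangle^\varepsilon\rightsquigarrow\langle t[v/x]\mid s\mid l\rangle^\varepsilon$; $\langle(\mathrm{let}\ x^+=t\ \mathrm{in}\ u)^\varepsilon\mid s\mid l\rangle^\varepsilon\rightsquigarrow\langle t\mid (x^+.u)^\varepsilon\cdot s\mid l\rangle^+$; $\langle v\mid (x^+.t)^\varepsilon\cdot s\mid l\rangle^+\rightsquigarrow\langle t[v/x]\mid s\mid l\rangle^\varepsilon$; $\langle (v\,w)^\varepsilon\mid s\mid l\rangle^\varepsilon\rightsquigarrow\langle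 v\mid w^\varepsilon\cdot s\mid l\rangle^-$; $\langle \lambda x.t\mid v^\varepsilon\cdot s\mid l\rangle^-\rightsquigarrow\langle t[v/x]\mid s\mid l\rangle^\varepsilon$; $\langle (\pi_i v)^\varepsilon\mid s\mid l\rangle^\varepsilon\rightsquigarrow\langle v\mid \pi_i^\varepsilon\cdot s\mid l\rangle^-$; $\langle \langle t_1,t_2\rangle\mid \pi_i^\varepsilon\cdot s\mid l\rangle^-\rightsquigarrow\langle t_i\mid s\mid l\rangle^\varepsilon$; $\langle \delta((v,w),(x,y).t)^\varepsilon\mid s\mid l\rangle^\varepsilon\rightsquigarrow\langle t[v/x,w/y]\mid s\mid l\rangle^\varepsilon$; $\langle \delta((),().t)^\varepsilon\mid s\mid l\rangle^\varepsilon\rightsquigarrow\langle t\mid s\mid l\rangle^\varepsilon$; $\langle \delta(\iota_i v,x_1.t_1,x_2.t_2)^\varepsilon\mid s\mid l\rangle^\varepsilon\rightsquigarrow\langle t_i[v/x_i]\mid s\mid l\rangle^\varepsilon$; $\langle \mathrm{new}\mid ()^{\varepsilon}\cdot s\mid r_n::l\rangle^-\rightsquigarrow\langle \iota_1 r_n\mid s\mid l\rangle^+$; $\langle \mathrm{new}\mid ()^{\varepsilon}\cdot s\mid []\rangle^-\rightsquigarrow\langle \iota_2 ()\mid s\mid []\rangle^+$; $\langle \mathrm{delete}\mid r_n^{\varepsilon}\cdot s\mid l\rangle^-\rightsquigarrow\langle ()\mid s\mid r_n::l\rangle^+$. *)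

(* Defs.v *)
From Stdlib Require Import List Arith Permutation Relations.
Import ListNotations.

Inductive pol : Type := Pos | Neg.

Inductive ty : Type :=
| TR : ty                       (* atomic type of resources R *)
| TOne : ty
| TTensor : ty -> ty -> ty
| TPlus : ty -> ty -> ty
| TLolli : ty -> ty -> ty
| TWith : ty -> ty -> ty.

Definition tpol (A : ty) : pol :=
  match A with
  | TR | TOne | TTensor _ _ | TPlus _ _ => Pos
  | TLolli _ _ | TWith _ _ => Neg
  end.

Inductive central : ty -> Prop :=
| central_one : central TOne
| central_tensor W W' : central W -> central W' -> central (TTensor W W')
| central_plus W W' : central W -> central W' -> central (TPlus W W').

Inductive side : Type := I1 | I2.
Definition sel {T : Type} (i : side) (a b : T) : T :=
  match i with I1 => a | I2 => b end.

Definition var := nat.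

(** Positive-annotated compound forms
    ( ... )^+ are expression constructors, negative-annotated ones ( ... )^-
    are value constructors.  Resource constant r_n is [VRes n]. *)
Inductive expr : Type :=
| EVal : value -> expr
| ELetP : var -> expr -> expr -> expr                  (* (let x^+ = t in u)^+ *)
| ELetN : var -> value -> expr -> expr                 (* (let x^- = v in u)^+ *)
| EDtens : value -> var -> var -> expr -> expr
| EDunit : value -> expr -> expr
| EDsum : value -> var -> expr -> var -> expr -> expr
| EApp : value -> value -> expr
| EPi : side -> value -> expr
with value : Type :=
| VLetP : var -> expr -> value -> value                (* (let x^+ = t in v)^- *)
| VLetN : var -> value -> value -> value               (* (let x^- = v in w)^- *)
| VDtens : value -> var -> var -> value -> value
| VDunit : value -> value -> value
| VDsum : value -> var -> value -> var -> value -> value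
| VApp : value -> value -> value
| VPi : side -> value -> value
| VVar : var -> value
| VNew : value
| VDelete : value
| VPair : value -> value -> value
| VUnit : value
| VInj : side -> value -> value
| VLam : var -> expr -> value
| VWith : expr -> expr -> value
| VRes : nat -> value.

Fixpoint fv_e (t : expr) : list var :=
  match t with
  | EVal v => fv_v v
  | ELetP x t u => fv_e t ++ remove Nat.eq_dec x (fv_e u)
  | ELetN x v u => fv_v v ++ remove Nat.eq_dec x (fv_e u)
  | EDtens v x y t => fv_v v ++ remove Nat.eq_dec x (remove Nat.eq_dec y (fv_e t))
  | EDunit v t => fv_v v ++ fv_e t
  | EDsum v x t y u => fv_v v ++ remove Nat.eq_dec x (fv_e t) ++ remove Nat.eq_dec y (fv_e u)
  | EApp v w => fv_v v ++ fv_v w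
  | EPi _ v => fv_v v
  end
with fv_v (v : value) : list var :=
  match v with
  | VLetP x t w => fv_e t ++ remove Nat.eq_dec x (fv_v w)
  | VLetN x v w => fv_v v ++ remove Nat.eq_dec x (fv_v w)
  | VDtens v x y w => fv_v v ++ remove Nat.eq_dec x (remove Nat.eq_dec y (fv_v w))
  | VDunit v w => fv_v v ++ fv_v w
  | VDsum v x w y w' => fv_v v ++ remove Nat.eq_dec x (fv_v w) ++ remove Nat.eq_dec y (fv_v w')
  | VApp v w => fv_v v ++ fv_v w
  | VPi _ v => fv_v v
  | VVar x => [x]
  | VNew | VDelete | VUnit | VRes _ => []
  | VPair v w => fv_v v ++ fv_v w
  | VInj _ v => fv_v v
  | VLam x t => remove Nat.eq_dec x (fv_e t)
  | VWith t u => fv_e t ++ fv_e u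
  end.

Definition upd (s : var -> value) (x : var) (v : value) : var -> value :=
  fun z => if Nat.eq_dec z x then v else s z.

Definition range_fv (s : var -> value) (xs : list var) : list var :=
  flat_map (fun z => fv_v (s z)) xs.

Definition fresh_for (x : var) (avoid : list var) : var :=
  if in_dec Nat.eq_dec x avoid then S (list_max avoid) else x.

Fixpoint subst_e (s : var -> value) (t : expr) : expr :=
  match t with
  | EVal v => EVal (subst_v s v)
  | ELetP x t u =>
      let x' := fresh_for x (range_fv s (remove Nat.eq_dec x (fv_e u))) in
      ELetP x' (subst_e s t) (subst_e (upd s x (VVar x')) u)
  | ELetN x v u =>
      let x' := fresh_for x (range_fv s (remove Nat.eq_dec x (fv_e u))) in
      ELetN x' (subst_v s v) (subst_e (upd s x (VVar x')) u)
  | EDtens v x y t =>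
      let av := range_fv s (remove Nat.eq_dec x (remove Nat.eq_dec y (fv_e t))) in
      let x' := fresh_for x av in
      let y' := fresh_for y (x' :: av) in
      EDtens (subst_v s v) x' y' (subst_e (upd (upd s x (VVar x')) y (VVar y')) t)
  | EDunit v t => EDunit (subst_v s v) (subst_e s t)
  | EDsum v x t y u =>
      let x' := fresh_for x (range_fv s (remove Nat.eq_dec x (fv_e t))) in
      let y' := fresh_for y (range_fv s (remove Nat.eq_dec y (fv_e u))) in
      EDsum (subst_v s v) x' (subst_e (upd s x (VVar x')) t)
                          y' (subst_e (upd s y (VVar y')) u)
  | EApp v w => EApp (subst_v s v) (subst_v s w)
  | EPi i v => EPi i (subst_v s v)
  end
with subst_v (s : var -> value) (v : value) : value :=
  match v with
  | VLetP x t w =>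
      let x' := fresh_for x (range_fv s (remove Nat.eq_dec x (fv_v w))) in
      VLetP x' (subst_e s t) (subst_v (upd s x (VVar x')) w)
  | VLetN x v w =>
      let x' := fresh_for x (range_fv s (remove Nat.eq_dec x (fv_v w))) in
      VLetN x' (subst_v s v) (subst_v (upd s x (VVar x')) w)
  | VDtens v x y w =>
      let av := range_fv s (remove Nat.eq_dec x (remove Nat.eq_dec y (fv_v w))) in
      let x' := fresh_for x av in
      let y' := fresh_for y (x' :: av) in
      VDtens (subst_v s v) x' y' (subst_v (upd (upd s x (VVar x')) y (VVar y')) w)
  | VDunit v w => VDunit (subst_v s v) (subst_v s w)
  | VDsum v x w y w' =>
      let x' := fresh_for x (range_fv s (remove Nat.eq_dec x (fv_v w))) in
      let y' := fresh_for y (range_fv s (remove Nat.eq_dec y (fv_v w'))) in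
      VDsum (subst_v s v) x' (subst_v (upd s x (VVar x')) w)
                          y' (subst_v (upd s y (VVar y')) w')
  | VApp v w => VApp (subst_v s v) (subst_v s w)
  | VPi i v => VPi i (subst_v s v)
  | VVar x => s x
  | VNew => VNew
  | VDelete => VDelete
  | VPair v w => VPair (subst_v s v) (subst_v s w)
  | VUnit => VUnit
  | VInj i v => VInj i (subst_v s v)
  | VLam x t =>
      let x' := fresh_for x (range_fv s (remove Nat.eq_dec x (fv_e t))) in
      VLam x' (subst_e (upd s x (VVar x')) t)
  | VWith t u => VWith (subst_e s t) (subst_e s u)
  | VRes n => VRes n
  end.

Definition subst1 (t : expr) (v : value) (x : var) : expr := subst_e (upd VVar x v) t.
Definition subst1v (t : value) (v : value) (x : var) : value := subst_v (upd VVar x v) t.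
Definition subst2 (t : expr) (v : value) (x : var) (w : value) (y : var) : expr :=
  subst_e (upd (upd VVar x v) y w) t.
Definition subst2v (t : value) (v : value) (x : var) (w : value) (y : var) : value :=
  subst_v (upd (upd VVar x v) y w) t.

(** Typing.  Contexts are lists of typed variables; as usual, the variables of
    a context are pairwise distinct (checked where contexts are concatenated). *)
Definition ctx := list (var * ty).
Definition dom (G : ctx) : list var := map fst G.

Inductive has_type : ctx -> expr -> ty -> Prop :=
| T_var x A : has_type [(x, A)] (EVal (VVar x)) A
| T_struct G G' t A (rho : var -> var) :
    has_type G t A ->
    Permutation (map (fun p => (rho (fst p), snd p)) G) G' ->
    NoDup (dom G') ->
    has_type G' (subst_e (fun z => VVar (rho z)) t) A
| T_new : has_type [] (EVal VNew) (TLolli TOne (TPlus TR TOne))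
| T_delete : has_type [] (EVal VDelete) (TLolli TR TOne)
| T_let_PP G D x t u A B :
    tpol A = Pos -> tpol B = Pos ->
    has_type D t A -> has_type (G ++ [(x, A)]) u B -> NoDup (dom (G ++ D)) ->
    has_type (G ++ D) (ELetP x t u) B
| T_let_PN G D x t w A B :
    tpol A = Pos -> tpol B = Neg ->
    has_type D t A -> has_type (G ++ [(x, A)]) (EVal w) B -> NoDup (dom (G ++ D)) ->
    has_type (G ++ D) (EVal (VLetP x t w)) B
| T_let_NP G D x v u A B :
    tpol A = Neg -> tpol B = Pos ->
    has_type D (EVal v) A -> has_type (G ++ [(x, A)]) u B -> NoDup (dom (G ++ D)) ->
    has_type (G ++ D) (ELetN x v u) B
| T_let_NN G D x v w A B :
    tpol A = Neg -> tpol B = Neg ->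
    has_type D (EVal v) A -> has_type (G ++ [(x, A)]) (EVal w) B -> NoDup (dom (G ++ D)) ->
    has_type (G ++ D) (EVal (VLetN x v w)) B
| T_pair G D v w A B :
    has_type G (EVal v) A -> has_type D (EVal w) B -> NoDup (dom (G ++ D)) ->
    has_type (G ++ D) (EVal (VPair v w)) (TTensor A B)
| T_dtens_P G D G' v x y t A B C :
    tpol C = Pos ->
    has_type D (EVal v) (TTensor A B) ->
    has_type (G ++ (x, A) :: (y, B) :: G') t C ->
    NoDup (dom (G ++ D ++ G')) ->
    has_type (G ++ D ++ G') (EDtens v x y t) C
| T_dtens_N G D G' v x y w A B C :
    tpol C = Neg ->
    has_type D (EVal v) (TTensor A B) ->
    has_type (G ++ (x, A) :: (y, B) :: G') (EVal w) C ->
    NoDup (dom (G ++ D ++ G')) ->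
    has_type (G ++ D ++ G') (EVal (VDtens v x y w)) C
| T_unit : has_type [] (EVal VUnit) TOne
| T_dunit_P G D G' v t A :
    tpol A = Pos ->
    has_type D (EVal v) TOne -> has_type (G ++ G') t A ->
    NoDup (dom (G ++ D ++ G')) ->
    has_type (G ++ D ++ G') (EDunit v t) A
| T_dunit_N G D G' v w A :
    tpol A = Neg ->
    has_type D (EVal v) TOne -> has_type (G ++ G') (EVal w) A ->
    NoDup (dom (G ++ D ++ G')) ->
    has_type (G ++ D ++ G') (EVal (VDunit v w)) A
| T_inj (i : side) G v A1 A2 :
    has_type G (EVal v) (sel i A1 A2) ->
    has_type G (EVal (VInj i v)) (TPlus A1 A2)
| T_dsum_P G D G' v x t y u A B C :
    tpol C = Pos ->
    has_type D (EVal v) (TPlus A B) ->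
    has_type (G ++ (x, A) :: G') t C ->
    has_type (G ++ (y, B) :: G') u C ->
    NoDup (dom (G ++ D ++ G')) ->
    has_type (G ++ D ++ G') (EDsum v x t y u) C
| T_dsum_N G D G' v x w y w' A B C :
    tpol C = Neg ->
    has_type D (EVal v) (TPlus A B) ->
    has_type (G ++ (x, A) :: G') (EVal w) C ->
    has_type (G ++ (y, B) :: G') (EVal w') C ->
    NoDup (dom (G ++ D ++ G')) ->
    has_type (G ++ D ++ G') (EVal (VDsum v x w y w')) C
| T_lam x G t A B :
    has_type ((x, A) :: G) t B ->
    has_type G (EVal (VLam x t)) (TLolli A B)
| T_app_P G D w v A B :
    tpol B = Pos ->
    has_type G (EVal w) A -> has_type D (EVal v) (TLolli A B) ->
    NoDup (dom (G ++ D)) ->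
    has_type (G ++ D) (EApp v w) B
| T_app_N G D w v A B :
    tpol B = Neg ->
    has_type G (EVal w) A -> has_type D (EVal v) (TLolli A B) ->
    NoDup (dom (G ++ D)) ->
    has_type (G ++ D) (EVal (VApp v w)) B
| T_with G t u A B :
    has_type G t A -> has_type G u B ->
    has_type G (EVal (VWith t u)) (TWith A B)
| T_proj_P (i : side) G v A1 A2 :
    tpol (sel i A1 A2) = Pos ->
    has_type G (EVal v) (TWith A1 A2) ->
    has_type G (EPi i v) (sel i A1 A2)
| T_proj_N (i : side) G v A1 A2 :
    tpol (sel i A1 A2) = Neg ->
    has_type G (EVal v) (TWith A1 A2) ->
    has_type G (EVal (VPi i v)) (sel i A1 A2).

Inductive frame : Type :=
| FVal : value -> pol -> frame
| FProj : side -> pol -> frame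
| FLet : var -> expr -> pol -> frame.

Definition stack := list frame.
Definition reslist := list nat.            (* the list r_{n1} :: ... ; r_n is n *)

Record command : Type := Cmd { c_term : expr; c_stack : stack; c_res : reslist; c_pol : pol }.

Inductive step : command -> command -> Prop :=
| S_letN_P x v t s l : step (Cmd (ELetN x v t) s l Pos) (Cmd (subst1 t v x) s l Pos)
| S_letN_N x v w s l : step (Cmd (EVal (VLetN x v w)) s l Neg) (Cmd (EVal (subst1v w v x)) s l Neg)
| S_letP_P x t u s l : step (Cmd (ELetP x t u) s l Pos) (Cmd t (FLet x u Pos :: s) l Pos)
| S_letP_N x t w s l : step (Cmd (EVal (VLetP x t w)) s l Neg) (Cmd t (FLet x (EVal w) Neg :: s) l Pos)
| S_pop v x t e s l : step (Cmd (EVal v) (FLet x t e :: s) l Pos) (Cmd (subst1 t v x) s l e)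
| S_app_P v w s l : step (Cmd (EApp v w) s l Pos) (Cmd (EVal v) (FVal w Pos :: s) l Neg)
| S_app_N v w s l : step (Cmd (EVal (VApp v w)) s l Neg) (Cmd (EVal v) (FVal w Neg :: s) l Neg)
| S_lam x t v e s l : step (Cmd (EVal (VLam x t)) (FVal v e :: s) l Neg) (Cmd (subst1 t v x) s l e)
| S_proj_P i v s l : step (Cmd (EPi i v) s l Pos) (Cmd (EVal v) (FProj i Pos :: s) l Neg)
| S_proj_N i v s l : step (Cmd (EVal (VPi i v)) s l Neg) (Cmd (EVal v) (FProj i Neg :: s) l Neg)
| S_with i t1 t2 e s l : step (Cmd (EVal (VWith t1 t2)) (FProj i e :: s) l Neg) (Cmd (sel i t1 t2) s l e)
| S_dtens_P v w x y t s l :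
    step (Cmd (EDtens (VPair v w) x y t) s l Pos) (Cmd (subst2 t v x w y) s l Pos)
| S_dtens_N v w x y t s l :
    step (Cmd (EVal (VDtens (VPair v w) x y t)) s l Neg) (Cmd (EVal (subst2v t v x w y)) s l Neg)
| S_dunit_P t s l : step (Cmd (EDunit VUnit t) s l Pos) (Cmd t s l Pos)
| S_dunit_N t s l : step (Cmd (EVal (VDunit VUnit t)) s l Neg) (Cmd (EVal t) s l Neg)
| S_dsum_P i v x1 t1 x2 t2 s l :
    step (Cmd (EDsum (VInj i v) x1 t1 x2 t2) s l Pos)
         (Cmd (subst1 (sel i t1 t2) v (sel i x1 x2)) s l Pos)
| S_dsum_N i v x1 t1 x2 t2 s l :
    step (Cmd (EVal (VDsum (VInj i v) x1 t1 x2 t2)) s l Neg)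
         (Cmd (EVal (subst1v (sel i t1 t2) v (sel i x1 x2))) s l Neg)
| S_new_some e n s l :
    step (Cmd (EVal VNew) (FVal VUnit e :: s) (n :: l) Neg) (Cmd (EVal (VInj I1 (VRes n))) s l Pos)
| S_new_none e s :
    step (Cmd (EVal VNew) (FVal VUnit e :: s) [] Neg) (Cmd (EVal (VInj I2 VUnit)) s [] Pos)
| S_delete n e s l :
    step (Cmd (EVal VDelete) (FVal (VRes n) e :: s) l Neg) (Cmd (EVal VUnit) s (n :: l) Pos).

Definition steps : command -> command -> Prop := clos_refl_trans command step.

(* Main.v *)
Require Import Defs.
From Stdlib Require Import List Permutation Lia Arith Relations.
Import ListNotations.

Definition ty_eq_dec : forall a b : ty, {a = b} + {a <> b}.
Proof. decide equality. Qed.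
Definition vt_dec : forall a b : var * ty, {a = b} + {a <> b}.
Proof. decide equality; [apply ty_eq_dec | apply Nat.eq_dec]. Qed.

Ltac pcount dec :=
  let a := fresh "a" in
  apply (Permutation_count_occ dec); intro a;
  repeat match goal with
  | H : Permutation ?l1 ?l2 |- _ =>
      (let h := fresh in pose proof (proj1 (Permutation_count_occ dec l1 l2) H a) as h; clear H) || clear H
  end;
  repeat rewrite count_occ_app in *; cbn [count_occ app] in *; repeat rewrite count_occ_app in *; cbn [count_occ app] in *; repeat rewrite count_occ_app in *;
  repeat match goal with
  | |- context [if ?d then _ else _] => destruct d
  | H : context [if ?d then _ else _] |- _ => destruct d
  end; lia.
Ltac pn := pcount Nat.eq_dec.
Ltac pc := pcount vt_dec.

Inductive T2 : ctx -> expr -> ty -> list nat -> Prop :=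
| t2_var x A : T2 [(x, A)] (EVal (VVar x)) A []
| t2_new : T2 [] (EVal VNew) (TLolli TOne (TPlus TR TOne)) []
| t2_delete : T2 [] (EVal VDelete) (TLolli TR TOne) []
| t2_res n : T2 [] (EVal (VRes n)) TR [n]
| t2_unit : T2 [] (EVal VUnit) TOne []
| t2_letPP G D G0 x t u A B r1 r2 r0 :
    T2 D t A r1 -> T2 ((x, A) :: G) u B r2 -> ~ In x (dom G) ->
    Permutation (G ++ D) G0 -> Permutation (r1 ++ r2) r0 ->
    T2 G0 (ELetP x t u) B r0
| t2_letPN G D G0 x t w A B r1 r2 r0 : tpol B = Neg ->
    T2 D t A r1 -> T2 ((x, A) :: G) (EVal w) B r2 -> ~ In x (dom G) ->
    Permutation (G ++ D) G0 -> Permutation (r1 ++ r2) r0 ->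
    T2 G0 (EVal (VLetP x t w)) B r0
| t2_letNP G D G0 x v u A B r1 r2 r0 :
    T2 D (EVal v) A r1 -> T2 ((x, A) :: G) u B r2 -> ~ In x (dom G) ->
    Permutation (G ++ D) G0 -> Permutation (r1 ++ r2) r0 ->
    T2 G0 (ELetN x v u) B r0
| t2_letNN G D G0 x v w A B r1 r2 r0 : tpol B = Neg ->
    T2 D (EVal v) A r1 -> T2 ((x, A) :: G) (EVal w) B r2 -> ~ In x (dom G) ->
    Permutation (G ++ D) G0 -> Permutation (r1 ++ r2) r0 ->
    T2 G0 (EVal (VLetN x v w)) B r0
| t2_pair G D G0 v w A B r1 r2 r0 :
    T2 G (EVal v) A r1 -> T2 D (EVal w) B r2 ->
    Permutation (G ++ D) G0 -> Permutation (r1 ++ r2) r0 ->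
    T2 G0 (EVal (VPair v w)) (TTensor A B) r0
| t2_dtensP G D G0 v x y t A B C r1 r2 r0 :
    T2 D (EVal v) (TTensor A B) r1 -> T2 ((x, A) :: (y, B) :: G) t C r2 ->
    x <> y -> ~ In x (dom G) -> ~ In y (dom G) ->
    Permutation (G ++ D) G0 -> Permutation (r1 ++ r2) r0 ->
    T2 G0 (EDtens v x y t) C r0
| t2_dtensN G D G0 v x y w A B C r1 r2 r0 : tpol C = Neg ->
    T2 D (EVal v) (TTensor A B) r1 -> T2 ((x, A) :: (y, B) :: G) (EVal w) C r2 ->
    x <> y -> ~ In x (dom G) -> ~ In y (dom G) ->
    Permutation (G ++ D) G0 -> Permutation (r1 ++ r2) r0 ->
    T2 G0 (EVal (VDtens v x y w)) C r0
| t2_dunitP G D G0 v t A r1 r2 r0 :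
    T2 D (EVal v) TOne r1 -> T2 G t A r2 ->
    Permutation (G ++ D) G0 -> Permutation (r1 ++ r2) r0 ->
    T2 G0 (EDunit v t) A r0
| t2_dunitN G D G0 v w A r1 r2 r0 : tpol A = Neg ->
    T2 D (EVal v) TOne r1 -> T2 G (EVal w) A r2 ->
    Permutation (G ++ D) G0 -> Permutation (r1 ++ r2) r0 ->
    T2 G0 (EVal (VDunit v w)) A r0
| t2_inj i G v A1 A2 r :
    T2 G (EVal v) (sel i A1 A2) r -> T2 G (EVal (VInj i v)) (TPlus A1 A2) r
| t2_dsumP G D G0 v x t y u A B C r1 r2 r0 :
    T2 D (EVal v) (TPlus A B) r1 -> T2 ((x, A) :: G) t C r2 -> T2 ((y, B) :: G) u C r2 ->
    ~ In x (dom G) -> ~ In y (dom G) ->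
    Permutation (G ++ D) G0 -> Permutation (r1 ++ r2) r0 ->
    T2 G0 (EDsum v x t y u) C r0
| t2_dsumN G D G0 v x w y w' A B C r1 r2 r0 : tpol C = Neg ->
    T2 D (EVal v) (TPlus A B) r1 -> T2 ((x, A) :: G) (EVal w) C r2 -> T2 ((y, B) :: G) (EVal w') C r2 ->
    ~ In x (dom G) -> ~ In y (dom G) ->
    Permutation (G ++ D) G0 -> Permutation (r1 ++ r2) r0 ->
    T2 G0 (EVal (VDsum v x w y w')) C r0
| t2_lam x G t A B r :
    T2 ((x, A) :: G) t B r -> ~ In x (dom G) -> T2 G (EVal (VLam x t)) (TLolli A B) r
| t2_appP G D G0 w v A B r1 r2 r0 :
    T2 G (EVal w) A r1 -> T2 D (EVal v) (TLolli A B) r2 ->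
    Permutation (G ++ D) G0 -> Permutation (r1 ++ r2) r0 ->
    T2 G0 (EApp v w) B r0
| t2_appN G D G0 w v A B r1 r2 r0 : tpol B = Neg ->
    T2 G (EVal w) A r1 -> T2 D (EVal v) (TLolli A B) r2 ->
    Permutation (G ++ D) G0 -> Permutation (r1 ++ r2) r0 ->
    T2 G0 (EVal (VApp v w)) B r0
| t2_with G t u A B r :
    T2 G t A r -> T2 G u B r -> T2 G (EVal (VWith t u)) (TWith A B) r
| t2_projP i G v A1 A2 r :
    T2 G (EVal v) (TWith A1 A2) r -> T2 G (EPi i v) (sel i A1 A2) r
| t2_projN i G v A1 A2 r : tpol (sel i A1 A2) = Neg ->
    T2 G (EVal v) (TWith A1 A2) r -> T2 G (EVal (VPi i v)) (sel i A1 A2) r.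

Lemma notin_dom_perm G G' x : Permutation G G' -> ~ In x (dom G) -> ~ In x (dom G').
Proof.
  intros HP H Hin; apply H. eapply Permutation_in; [|exact Hin].
  apply Permutation_map; symmetry; exact HP.
Qed.

Lemma T2_perm G t A r : T2 G t A r -> forall G' r', Permutation G G' -> Permutation r r' -> T2 G' t A r'.
Proof.
  induction 1; intros G' r' HG Hr;
  try (apply Permutation_nil in HG; subst);
  try (apply Permutation_nil in Hr; subst);
  try solve [econstructor; eauto using perm_trans].
  - apply Permutation_length_1_inv in HG; subst; constructor.
  - apply Permutation_length_1_inv in Hr; subst; constructor.
  - constructor; [apply IHT2; auto | eapply notin_dom_perm; eauto].
Qed.

Lemma in_dom_perm G D G0 z : Permutation (G ++ D) G0 -> In z (dom G0) -> In z (dom G) \/ In z (dom D).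
Proof.
  intros HP Hin. apply in_app_or. unfold dom. rewrite <- map_app.
  eapply Permutation_in; [|exact Hin]. apply Permutation_map; symmetry; exact HP.
Qed.

Lemma rem_helper x z l : In z l -> z <> x -> In z (remove Nat.eq_dec x l).
Proof. intros; apply in_in_remove; auto. Qed.

Ltac fin := match goal with
 | |- _ \/ _ => first [left; fin | right; fin]
 | |- In _ (remove _ _ _) => apply rem_helper; [fin | auto ]
 | IH : forall z, _ -> In z ?l |- In _ ?l => solve [apply IH; simpl; auto]
 end.

Lemma T2_dom G t A r : T2 G t A r -> forall z, In z (dom G) -> In z (fv_e t).
Proof.
  induction 1; intros z Hz; simpl in *;
  repeat match goal with
  | HP : Permutation (_ ++ _) ?G0, Hz : In z (dom ?G0) |- _ => destruct (in_dom_perm _ _ _ _ HP Hz) as [Hz'|Hz']; clear HP Hz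
  end;
  repeat rewrite in_app_iff.
  all: try tauto.
  all: try (destruct (Nat.eq_dec z x); [subst; tauto|]).
  all: try (destruct (Nat.eq_dec z y); [subst; tauto|]).
  all: fin.
Qed.

Inductive SubstOK (s : var -> value) : ctx -> ctx -> list nat -> Prop :=
| sok_nil : SubstOK s [] [] []
| sok_cons z B G Dz rz D r : T2 Dz (EVal (s z)) B rz -> SubstOK s G D r ->
    SubstOK s ((z, B) :: G) (Dz ++ D) (rz ++ r).

Lemma sok_app s G1 G2 D r : SubstOK s (G1 ++ G2) D r ->
  exists D1 D2 r1 r2, SubstOK s G1 D1 r1 /\ SubstOK s G2 D2 r2 /\ D = D1 ++ D2 /\ r = r1 ++ r2.
Proof.
  revert D r; induction G1 as [|[z B] G1 IH]; intros D r H; simpl in *.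
  - exists [], D, [], r; repeat split; auto; constructor.
  - inversion H as [|? ? ? ? ? ? ? HT HS]; subst. destruct (IH _ _ HS) as (D1 & D2 & r1 & r2 & H1 & H2 & -> & ->).
    exists (Dz ++ D1), D2, (rz ++ r1), r2; repeat split; try constructor; auto; apply app_assoc.
Qed.

Lemma sok_perm s G G' : Permutation G G' -> forall D r, SubstOK s G D r ->
  exists D' r', SubstOK s G' D' r' /\ Permutation D D' /\ Permutation r r'.
Proof.
  induction 1; intros D r HH.
  - exists D, r; auto.
  - inversion HH as [|? ? ? ? ? ? ? HT HS]; subst. destruct (IHPermutation _ _ HS) as (D' & r' & H1 & H2 & H3).
    exists (Dz ++ D'), (rz ++ r'); repeat split; try constructor; auto; apply Permutation_app_head; auto.
  - inversion HH as [|? ? ? ? ? ? ? HT HS]; subst. inversion HS as [|? ? ? ? ? ? ? HT' HS']; subst.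
    match goal with |- exists _ _, SubstOK s (_ :: _ :: ?l) _ _ /\ Permutation (?a ++ ?b ++ ?c) _ /\ Permutation (?ra ++ ?rb ++ ?rc) _ =>
      exists (b ++ a ++ c), (rb ++ ra ++ rc) end; repeat split; try constructor; auto; try constructor; auto.
    + rewrite !app_assoc; apply Permutation_app_tail, Permutation_app_comm.
    + rewrite !app_assoc; apply Permutation_app_tail, Permutation_app_comm.
  - destruct (IHPermutation1 _ _ HH) as (D1 & r1 & H2 & H3 & H4).
    destruct (IHPermutation2 _ _ H2) as (D2 & r2 & H5 & H6 & H7).
    exists D2, r2; repeat split; eauto using perm_trans.
Qed.

Lemma sok_split s G D G0 Ds rs : Permutation (G ++ D) G0 -> SubstOK s G0 Ds rs ->
  exists DG DD rG rD, SubstOK s G DG rG /\ SubstOK s D DD rD /\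
    Permutation (DG ++ DD) Ds /\ Permutation (rG ++ rD) rs.
Proof.
  intros HP H. destruct (sok_perm s _ _ (Permutation_sym HP) _ _ H) as (D' & r' & H1 & H2 & H3).
  destruct (sok_app _ _ _ _ _ H1) as (D1 & D2 & r1 & r2 & H4 & H5 & -> & ->).
  exists D1, D2, r1, r2; repeat split; auto; symmetry; auto.
Qed.

Lemma sok_ext s s' G D r : (forall z, In z (dom G) -> s z = s' z) -> SubstOK s G D r -> SubstOK s' G D r.
Proof.
  intros He H; induction H; constructor.
  - rewrite <- He; simpl; auto.
  - apply IHSubstOK; intros; apply He; simpl; auto.
Qed.

Lemma upd_eq s x v : upd s x v x = v.
Proof. unfold upd; destruct (Nat.eq_dec x x); congruence. Qed.
Lemma upd_neq s x v z : z <> x -> upd s x v z = s z.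
Proof. unfold upd; destruct (Nat.eq_dec z x); congruence. Qed.

Lemma sok_bind s x x' A G DG rG : ~ In x (dom G) -> SubstOK s G DG rG ->
  SubstOK (upd s x (VVar x')) ((x, A) :: G) ((x', A) :: DG) rG.
Proof.
  intros Hx H. apply (sok_cons _ x A G [(x', A)] [] DG rG).
  - rewrite upd_eq; constructor.
  - eapply sok_ext; [|exact H]. intros z Hz; rewrite upd_neq; auto. intro; subst; auto.
Qed.

Lemma sok_bind2 s x x' y y' A B G DG rG : x <> y -> ~ In x (dom G) -> ~ In y (dom G) -> SubstOK s G DG rG ->
  SubstOK (upd (upd s x (VVar x')) y (VVar y')) ((x, A) :: (y, B) :: G) ((x', A) :: (y', B) :: DG) rG.
Proof.
  intros Hxy Hx Hy H. apply (sok_cons _ x A _ [(x', A)] [] ((y', B) :: DG) rG).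
  - rewrite upd_neq, upd_eq; auto; constructor.
  - apply (sok_cons _ y B G [(y', B)] [] DG rG).
    + rewrite upd_eq; constructor.
    + eapply sok_ext; [|exact H]. intros z Hz; rewrite !upd_neq; auto; intro; subst; auto.
Qed.

Lemma sok_range s G D r L : SubstOK s G D r -> (forall z, In z (dom G) -> In z L) ->
  forall w, In w (dom D) -> In w (range_fv s L).
Proof.
  induction 1; intros HL w Hw; simpl in *; [tauto|].
  unfold dom in Hw; rewrite map_app, in_app_iff in Hw. destruct Hw as [Hw|Hw].
  - unfold range_fv; apply in_flat_map. exists z; split; auto.
    apply (T2_dom _ _ _ _ H) in Hw. exact Hw.
  - apply IHSubstOK; auto.
Qed.

Lemma fresh_not_in x L : ~ In (fresh_for x L) L.
Proof.
  unfold fresh_for; destruct (in_dec Nat.eq_dec x L); auto.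
  intro H. assert (Hle : list_max L <= list_max L) by lia.
  apply list_max_le in Hle. rewrite Forall_forall in Hle. apply Hle in H. lia.
Qed.

Lemma fresh_dom s G DG rG L x : SubstOK s G DG rG -> (forall z, In z (dom G) -> In z L) ->
  ~ In (fresh_for x (range_fv s L)) (dom DG).
Proof. intros H HL Hin. apply (fresh_not_in x (range_fv s L)). eapply sok_range; eauto. Qed.

Lemma fresh_dom2 s G DG rG L x a : SubstOK s G DG rG -> (forall z, In z (dom G) -> In z L) ->
  ~ In (fresh_for x (a :: range_fv s L)) (dom DG).
Proof. intros H HL Hin. apply (fresh_not_in x (a :: range_fv s L)). right. eapply sok_range; eauto. Qed.

Lemma fresh_neq x a L : fresh_for x (a :: L) <> a.
Proof. intro H. apply (fresh_not_in x (a :: L)). rewrite H; left; auto. Qed.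

Lemma dom_rem1 x A G u B r : T2 ((x, A) :: G) u B r -> ~ In x (dom G) ->
  forall z, In z (dom G) -> In z (remove Nat.eq_dec x (fv_e u)).
Proof.
  intros H Hx z Hz. apply rem_helper. apply (T2_dom _ _ _ _ H). simpl; auto.
  intro; subst; auto.
Qed.

Lemma dom_rem2 x y A B G u C r : T2 ((x, A) :: (y, B) :: G) u C r -> ~ In x (dom G) -> ~ In y (dom G) ->
  forall z, In z (dom G) -> In z (remove Nat.eq_dec x (remove Nat.eq_dec y (fv_e u))).
Proof.
  intros H Hx Hy z Hz. apply rem_helper. apply rem_helper. apply (T2_dom _ _ _ _ H). simpl; auto.
  all: intro; subst; auto.
Qed.

Ltac split_sok := match goal with HP : Permutation (?G ++ ?D) ?G0, HS : SubstOK ?s ?G0 _ _ |- _ =>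
  let DG := fresh "DG" in let DD := fresh "DD" in let rG := fresh "rG" in let rD := fresh "rD" in
  let HG := fresh "HG" in let HD := fresh "HD" in let HP1 := fresh "HP1" in let HP2 := fresh "HP2" in
  destruct (sok_split _ _ _ _ _ _ HP HS) as (DG & DD & rG & rD & HG & HD & HP1 & HP2) end.

Ltac domrem := intros ?z ?Hz;
  first [ match goal with Hd : T2 ((?x, _) :: ?G) _ _ _, Hn : ~ In ?x (dom ?G) |- In _ (remove _ ?x _) =>
            exact (dom_rem1 _ _ _ _ _ _ Hd Hn _ Hz) end
        | match goal with Hd : T2 ((?x, _) :: (?y, _) :: ?G) _ _ _, Hn : ~ In ?x (dom ?G), Hn' : ~ In ?y (dom ?G)
            |- In _ (remove _ ?x (remove _ ?y _)) =>
            exact (dom_rem2 _ _ _ _ _ _ _ _ Hd Hn Hn' _ Hz) end ].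

Ltac prem := first
  [ assumption
  | match goal with IH : forall s D rs, SubstOK s _ D rs -> T2 D _ _ _ |- T2 _ _ _ _ =>
      eapply IH; first [ eassumption | apply sok_bind; eassumption | apply sok_bind2; eassumption ] end
  | solve [eapply fresh_dom; [eassumption | domrem]]
  | solve [eapply fresh_dom2; [eassumption | domrem]]
  | solve [let E := fresh in intro E; symmetry in E; eapply fresh_neq; exact E]
  | solve [pn] ].

Lemma T2_subst G t A r : T2 G t A r -> forall s D rs, SubstOK s G D rs -> T2 D (subst_e s t) A (r ++ rs).
Proof.
  induction 1; intros s Ds rs HS; cbn [subst_e subst_v].
  1: { inversion HS as [|? ? ? Dz rz D' r' HT HS']; subst. inversion HS'; subst.
    eapply T2_perm; [exact HT| rewrite app_nil_r; auto | simpl; rewrite app_nil_r; auto]. }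
  all: try (inversion HS; subst; simpl; constructor; fail).
  all: try split_sok.
  all: econstructor; prem.
Qed.

Lemma ht_nodup G t A : has_type G t A -> NoDup (dom G).
Proof.
  induction 1; simpl; auto; try constructor; auto; try constructor.
  - unfold dom in *; simpl in IHhas_type. inversion IHhas_type; auto.
Qed.

Lemma nodup_mid G x A G' : NoDup (dom (G ++ (x, A) :: G')) -> ~ In x (dom (G ++ G')).
Proof. unfold dom; rewrite !map_app; simpl. apply NoDup_remove_2. Qed.

Lemma nodup_mid2 G x A y B G' : NoDup (dom (G ++ (x, A) :: (y, B) :: G')) ->
  x <> y /\ ~ In x (dom (G ++ G')) /\ ~ In y (dom (G ++ G')).
Proof.
  intro H. pose proof (nodup_mid _ _ _ _ H) as H1.
  assert (H2 : NoDup (dom ((G ++ [(x, A)]) ++ (y, B) :: G'))) by (rewrite <- app_assoc; exact H).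
  apply nodup_mid in H2.
  unfold dom in *; rewrite !map_app in *; simpl in *.
  repeat split.
  - intro E; subst; apply H1; rewrite in_app_iff; simpl; auto.
  - intro Hin; apply H1; rewrite in_app_iff in *; simpl; tauto.
  - intro Hin; apply H2; rewrite !in_app_iff in *; simpl; tauto.
Qed.

Lemma sok_ren (rho : var -> var) G : SubstOK (fun z => VVar (rho z)) G (map (fun p => (rho (fst p), snd p)) G) [].
Proof.
  induction G as [|[z B] G IH]; simpl; [constructor|].
  apply (sok_cons _ z B G [(rho z, B)] [] _ [] (t2_var _ _) IH).
Qed.

Lemma ht_T2 G t A : has_type G t A -> T2 G t A [].
Proof.
  induction 1.
  - constructor.
  - eapply T2_perm; [eapply T2_subst; [exact IHhas_type | apply sok_ren] | exact H0 | auto].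
  - constructor.
  - constructor.
  - pose proof (nodup_mid G x A [] (ht_nodup _ _ _ H2)) as Hn.
    rewrite app_nil_r in Hn.
    eapply t2_letPP with (r1 := []) (r2 := []); eauto; try (simpl; apply perm_nil). eapply T2_perm; [exact IHhas_type2| pc | auto].
  - pose proof (nodup_mid G x A [] (ht_nodup _ _ _ H2)) as Hn.
    rewrite app_nil_r in Hn.
    eapply t2_letPN with (r1 := []) (r2 := []); eauto; try (simpl; apply perm_nil). eapply T2_perm; [exact IHhas_type2| pc | auto].
  - pose proof (nodup_mid G x A [] (ht_nodup _ _ _ H2)) as Hn.
    rewrite app_nil_r in Hn.
    eapply t2_letNP with (r1 := []) (r2 := []); eauto; try (simpl; apply perm_nil). eapply T2_perm; [exact IHhas_type2| pc | auto].
  - pose proof (nodup_mid G x A [] (ht_nodup _ _ _ H2)) as Hn.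
    rewrite app_nil_r in Hn.
    eapply t2_letNN with (r1 := []) (r2 := []); eauto; try (simpl; apply perm_nil). eapply T2_perm; [exact IHhas_type2| pc | auto].
  - eapply t2_pair with (r1 := []) (r2 := []); eauto; try (simpl; apply perm_nil).
  - destruct (nodup_mid2 _ _ _ _ _ _ (ht_nodup _ _ _ H1)) as (Hxy & Hx & Hy).
    eapply t2_dtensP with (G := G ++ G') (r1 := []) (r2 := []); eauto; try (simpl; apply perm_nil). eapply T2_perm; [exact IHhas_type2| pc | auto]. pc.
  - destruct (nodup_mid2 _ _ _ _ _ _ (ht_nodup _ _ _ H1)) as (Hxy & Hx & Hy).
    eapply t2_dtensN with (G := G ++ G') (r1 := []) (r2 := []); eauto; try (simpl; apply perm_nil). eapply T2_perm; [exact IHhas_type2| pc | auto]. pc.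
  - constructor.
  - eapply t2_dunitP with (G := G ++ G') (r1 := []) (r2 := []); eauto; try (simpl; apply perm_nil). pc.
  - eapply t2_dunitN with (G := G ++ G') (r1 := []) (r2 := []); eauto; try (simpl; apply perm_nil). pc.
  - constructor; auto.
  - pose proof (nodup_mid _ _ _ _ (ht_nodup _ _ _ H1)) as Hx.
    pose proof (nodup_mid _ _ _ _ (ht_nodup _ _ _ H2)) as Hy.
    eapply t2_dsumP with (G := G ++ G') (r1 := []) (r2 := []); eauto; try (simpl; apply perm_nil).
    eapply T2_perm; [exact IHhas_type2| pc | auto]. eapply T2_perm; [exact IHhas_type3| pc | auto]. pc.
  - pose proof (nodup_mid _ _ _ _ (ht_nodup _ _ _ H1)) as Hx.
    pose proof (nodup_mid _ _ _ _ (ht_nodup _ _ _ H2)) as Hy.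
    eapply t2_dsumN with (G := G ++ G') (r1 := []) (r2 := []); eauto; try (simpl; apply perm_nil).
    eapply T2_perm; [exact IHhas_type2| pc | auto]. eapply T2_perm; [exact IHhas_type3| pc | auto]. pc.
  - constructor; auto. pose proof (nodup_mid [] x A G (ht_nodup _ _ _ H)) as Hx; exact Hx.
  - eapply t2_appP with (r1 := []) (r2 := []); eauto; try (simpl; apply perm_nil).
  - eapply t2_appN with (r1 := []) (r2 := []); eauto; try (simpl; apply perm_nil).
  - constructor; auto.
  - constructor; auto.
  - constructor; auto.
Qed.

Inductive STy : stack -> ty -> ty -> list nat -> Prop :=
| sty_nil A : STy [] A A []
| sty_let x u e s A B C r rs : T2 [(x, A)] u B r -> STy s B C rs -> STy (FLet x u e :: s) A C (r ++ rs)
| sty_val v e s A B C r rs : T2 [] (EVal v) A r -> STy s B C rs -> STy (FVal v e :: s) (TLolli A B) C (r ++ rs)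
| sty_proj i e s A1 A2 C rs : STy s (sel i A1 A2) C rs -> STy (FProj i e :: s) (TWith A1 A2) C rs.

Definition CTy (c : command) (W : ty) (M : list nat) : Prop :=
  exists A rt rs, T2 [] (c_term c) A rt /\ STy (c_stack c) A W rs /\ Permutation (rt ++ rs ++ c_res c) M.

Lemma perm_nil_app {T} (G D : list T) : Permutation (G ++ D) [] -> G = [] /\ D = [].
Proof. intro H. apply Permutation_sym, Permutation_nil, app_eq_nil in H. exact H. Qed.

Lemma sub1 x A t B r v rv : T2 [(x, A)] t B r -> T2 [] (EVal v) A rv -> T2 [] (subst1 t v x) B (r ++ rv).
Proof.
  intros Ht Hv. unfold subst1.
  assert (HS : SubstOK (upd VVar x v) [(x, A)] ([] ++ []) (rv ++ [])).
  { constructor; [rewrite upd_eq; exact Hv | constructor]. }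
  pose proof (T2_subst _ _ _ _ Ht _ _ _ HS) as H. rewrite !app_nil_r in H. exact H.
Qed.

Lemma sub1v x A w B r v rv : T2 [(x, A)] (EVal w) B r -> T2 [] (EVal v) A rv -> T2 [] (EVal (subst1v w v x)) B (r ++ rv).
Proof. intros; eapply (sub1 x A (EVal w)); eauto. Qed.

Lemma sub2 x A y B t C r v rv w rw : x <> y -> T2 [(x, A); (y, B)] t C r -> T2 [] (EVal v) A rv -> T2 [] (EVal w) B rw ->
  T2 [] (subst2 t v x w y) C (r ++ rv ++ rw).
Proof.
  intros Hxy Ht Hv Hw. unfold subst2.
  assert (HS : SubstOK (upd (upd VVar x v) y w) [(x, A); (y, B)] ([] ++ [] ++ []) (rv ++ rw ++ [])).
  { constructor; [rewrite upd_neq, upd_eq; auto | constructor; [rewrite upd_eq; exact Hw | constructor]]. }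
  pose proof (T2_subst _ _ _ _ Ht _ _ _ HS) as H. rewrite !app_nil_r in H. exact H.
Qed.

Lemma sub2v x A y B t C r v rv w rw : x <> y -> T2 [(x, A); (y, B)] (EVal t) C r -> T2 [] (EVal v) A rv -> T2 [] (EVal w) B rw ->
  T2 [] (EVal (subst2v t v x w y)) C (r ++ rv ++ rw).
Proof. intros; eapply (sub2 x A y B (EVal t)); eauto. Qed.

Ltac nilctx := repeat match goal with
  | H : Permutation (_ ++ _) [] |- _ => apply perm_nil_app in H as [? ?]; subst
  end.

Lemma preserve c c' W M : step c c' -> CTy c W M -> CTy c' W M.
Proof.
  intros Hs (A & rt & rs & Ht & Hst & Hp). destruct Hs; simpl in *.
  - inversion Ht; subst; nilctx.
    do 3 eexists; split; [eapply sub1; eauto | split; [eauto | simpl; pn]].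
  - inversion Ht; subst; nilctx.
    do 3 eexists; split; [eapply sub1v; eauto | split; [eauto | simpl; pn]].
  - inversion Ht; subst; nilctx.
    do 3 eexists; split; [eauto | split; [econstructor; eauto | simpl; pn]].
  - inversion Ht; subst; nilctx.
    do 3 eexists; split; [eauto | split; [econstructor; eauto | simpl; pn]].
  - inversion Hst; subst.
    do 3 eexists; split; [eapply sub1; eauto | split; [eauto | simpl; pn]].
  - inversion Ht; subst; nilctx.
    do 3 eexists; split; [eauto | split; [econstructor; eauto | simpl; pn]].
  - inversion Ht; subst; nilctx.
    do 3 eexists; split; [eauto | split; [econstructor; eauto | simpl; pn]].
  - inversion Ht; subst. inversion Hst; subst.
    do 3 eexists; split; [eapply sub1; eauto | split; [eauto | simpl; pn]].
  - inversion Ht; subst.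
    do 3 eexists; split; [eauto | split; [econstructor; eauto | simpl; pn]].
  - inversion Ht; subst.
    do 3 eexists; split; [eauto | split; [econstructor; eauto | simpl; pn]].
  - inversion Ht; subst. inversion Hst; subst.
    match goal with H : STy s (sel i ?A1 ?A2) _ _ |- _ => exists (sel i A1 A2), rt, rs end; split; [destruct i; simpl; assumption | split; [assumption | simpl; pn]].
  - inversion Ht; subst; nilctx. match goal with H : T2 [] (EVal (VPair _ _)) _ _ |- _ => inversion H; subst end; nilctx.
    do 3 eexists; split; [eapply sub2; eauto | split; [eauto | simpl; pn]].
  - inversion Ht; subst; nilctx. match goal with H : T2 [] (EVal (VPair _ _)) _ _ |- _ => inversion H; subst end; nilctx.
    do 3 eexists; split; [eapply sub2v; eauto | split; [eauto | simpl; pn]].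
  - inversion Ht; subst; nilctx. match goal with H : T2 [] (EVal VUnit) _ _ |- _ => inversion H; subst end.
    do 3 eexists; split; [eauto | split; [eauto | simpl; pn]].
  - inversion Ht; subst; nilctx. match goal with H : T2 [] (EVal VUnit) _ _ |- _ => inversion H; subst end.
    do 3 eexists; split; [eauto | split; [eauto | simpl; pn]].
  - inversion Ht; subst; nilctx. match goal with H : T2 [] (EVal (VInj _ _)) _ _ |- _ => inversion H; subst end.
    do 3 eexists; split; [destruct i; simpl in *; eapply sub1; eauto | split; [eauto | simpl; pn]].
  - inversion Ht; subst; nilctx. match goal with H : T2 [] (EVal (VInj _ _)) _ _ |- _ => inversion H; subst end.
    do 3 eexists; split; [destruct i; simpl in *; eapply sub1v; eauto | split; [eauto | simpl; pn]].
  - inversion Ht; subst. inversion Hst; subst.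
    match goal with H : T2 [] (EVal VUnit) _ _ |- _ => inversion H; subst end.
    exists (TPlus TR TOne), [n]; eexists; split; [apply (t2_inj I1); constructor | split; [eauto | simpl; pn]].
  - inversion Ht; subst. inversion Hst; subst.
    match goal with H : T2 [] (EVal VUnit) _ _ |- _ => inversion H; subst end.
    exists (TPlus TR TOne), []; eexists; split; [apply (t2_inj I2); constructor | split; [eauto | simpl; pn]].
  - inversion Ht; subst. inversion Hst; subst.
    match goal with H : T2 [] (EVal (VRes _)) _ _ |- _ => inversion H; subst end.
    exists TOne, []; eexists; split; [constructor | split; [eauto | simpl; pn]].
Qed.

Lemma preserve_steps c c' W M : steps c c' -> CTy c W M -> CTy c' W M.
Proof.
  induction 1; intros; eauto using preserve.
Qed.

Lemma central_pos A : central A -> tpol A = Pos.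
Proof. destruct 1; reflexivity. Qed.

Lemma central_nores G t A r : T2 G t A r -> G = [] -> central A -> (exists v, t = EVal v) -> r = [].
Proof.
  induction 1; intros HG HC [v0 Hv]; try discriminate; subst; auto;
  try (apply central_pos in HC; congruence);
  try (inversion HC; fail).
  - nilctx. inversion HC; subst.
    assert (r1 = []) by (apply IHT2_1; eauto). assert (r2 = []) by (apply IHT2_2; eauto). subst.
    match goal with H: Permutation ([] ++ []) _ |- _ => apply Permutation_nil in H; auto end.
  - inversion HC; subst. apply IHT2; eauto. destruct i; auto.
Qed.

Theorem theorem5 (W : ty) (t : expr) :
  central W -> fv_e t = nil -> has_type nil t W ->
  forall (v : value) (l l' : reslist) (e : pol),
    steps (Cmd t nil l Pos) (Cmd (EVal v) nil l' e) ->
    Permutation l l'.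
Proof.
  intros HW _ Ht v l l' e Hs.
  assert (H0 : CTy (Cmd t [] l Pos) W l).
  { exists W, [], []; split; [apply ht_T2; exact Ht | split; [constructor | simpl; auto]]. }
  destruct (preserve_steps _ _ _ _ Hs H0) as (A & rt & rs & H1 & H2 & H3). simpl in *.
  inversion H2; subst.
  rewrite (central_nores _ _ _ _ H1 eq_refl HW (ex_intro _ _ eq_refl)) in H3.
  simpl in H3. symmetry; exact H3.
Qed.
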